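(* Let $\mathcal S=(\mathcal P,\mathcal L)$ be a linear space with $v$ points, constant line size $k$ with $2<k<v$, and $r$ lines through each point; let $G\le\mathrm{Aut}(\mathcal S)$ be transitive on lines, and let $\mathfrak C$ be a non-trivial $G$-invariant partition of $\mathcal P$. If $\gcd(k,r)\le 8$, then $G$ is $2$-step imprimitive relative to $\mathfrak C$, that is, $\mathfrak C$ is both a minimal and a maximal non-trivial $G$-invariant partition of $\mathcal P$.
   Context: A linear space: a finite set $\mathcal P$ of points and a set $\mathcal L$ of subsets (lines) such that any two distinct points lie on exactly one line and each line has at least two points. A partition is non-trivial if it has more than one class and its classes have more than one element. $\mathfrak C$ is minimal if no non-trivial $G$-invariant partition strictly refines it, and maximal if no non-trivial $G$-invariant partition is strictly coarser than it. *)

(* Defs.v *)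
From mathcomp Require Import all_boot all_order all_fingroup.
Set Implicit Arguments. Unset Strict Implicit. Unset Printing Implicit Defensive.

Definition linear_space (P : finType) (L : {set {set P}}) : Prop :=
  (forall l, l \in L -> 2 <= #|l|) /\
  (forall x y : P, x != y -> exists! l, l \in L /\ x \in l /\ y \in l).

Definition is_aut (P : finType) (L : {set {set P}}) (g : {perm P}) : Prop :=
  [set (fun x : P => g x) @: l | l : {set P} in L] = L.

Definition line_transitive (P : finType) (L : {set {set P}})
  (G : {group {perm P}}) : Prop :=
  forall l1 l2, l1 \in L -> l2 \in L -> exists2 g : {perm P}, g \in G & (fun x : P => g x) @: l1 = l2.

Definition is_partition (P : finType) (C : {set {set P}}) : Prop :=
  partition C [set: P].

Definition G_invariant (P : finType) (G : {group {perm P}}) (C : {set {set P}}) : Prop :=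
  forall g B, g \in G -> B \in C -> (fun x : P => g x) @: B \in C.

Definition nontrivial_partition (P : finType) (C : {set {set P}}) : Prop :=
  is_partition C /\ 1 < #|C| /\ (forall B, B \in C -> 1 < #|B|).

Definition nontrivial_G_partition (P : finType) (G : {group {perm P}})
  (C : {set {set P}}) : Prop :=
  nontrivial_partition C /\ G_invariant G C.

Definition refines (P : finType) (D C : {set {set P}}) : Prop :=
  forall B, B \in D -> exists2 B', B' \in C & B \subset B'.

Definition minimal_G_partition (P : finType) (G : {group {perm P}})
  (C : {set {set P}}) : Prop :=
  ~ exists D, [/\ nontrivial_G_partition G D, refines D C & D != C].

Definition maximal_G_partition (P : finType) (G : {group {perm P}})
  (C : {set {set P}}) : Prop :=
  ~ exists D, [/\ nontrivial_G_partition G D, refines C D & D != C].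

(* Main.v *)
Require Import Defs.
From mathcomp Require Import all_boot all_order all_fingroup.
From mathcomp Require Import zify ring.
From Stdlib Require NArith.
Set Implicit Arguments. Unset Strict Implicit. Unset Printing Implicit Defensive.

Definition badN (e a k1 t1 t2 t3 : nat) : bool :=
  let E := BinNat.N.of_nat e in let A := BinNat.N.of_nat a in let K := BinNat.N.of_nat k1 in
  let T1 := BinNat.N.of_nat t1 in let T2 := BinNat.N.of_nat t2 in let T3 := BinNat.N.of_nat t3 in
  BinNat.N.eqb (BinNat.N.mul (BinNat.N.of_nat 2) (BinNat.N.add (BinNat.N.add (BinNat.N.add (BinNat.N.add T1 T2) T3)
                 (BinNat.N.mul A (BinNat.N.add (BinNat.N.add (BinNat.N.mul T1 T2) (BinNat.N.mul T1 T3)) (BinNat.N.mul T2 T3))))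
                 (BinNat.N.mul (BinNat.N.mul A A) (BinNat.N.mul (BinNat.N.mul T1 T2) T3))))
        (BinNat.N.mul E (BinNat.N.sub (BinNat.N.mul E K) (BinNat.N.of_nat 1))).

Definition checkb :=
  all (fun e => all (fun a => all (fun k1 =>
    all (fun t1 => all (fun t2 => all (fun t3 =>
      ~~ (badN e a k1 t1 t2 t3 && ~~ odd (e*a) && (gcdn (e*k1) (e*a %/ 2) <= 8)))
      (iota 1 (63 %/ (a*t1*t2)))) (iota 1 (63 %/ (a*t1)))) (iota 1 (63 %/ a)))
    (iota 1 (a %/ 2))) (iota 2 62)) (iota 1 16).

Lemma checkb_true : checkb.
Proof. vm_compute. reflexivity. Qed.

Lemma badN_of e a k1 t1 t2 t3 : 1 <= e -> 1 <= k1 ->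
  2*(t1+t2+t3 + a*(t1*t2+t1*t3+t2*t3) + a*a*(t1*t2*t3)) = e*(e*k1-1) ->
  badN e a k1 t1 t2 t3.
Proof. move=> e1 k11 h; rewrite /badN; apply/BinNat.N.eqb_eq; lia. Qed.

Lemma check_false e a k1 t1 t2 t3 :
  1 <= e <= 16 -> 1 <= k1 -> 2 * k1 <= a -> 1 <= t1 -> 1 <= t2 -> 1 <= t3 ->
  2*(t1+t2+t3 + a*(t1*t2+t1*t3+t2*t3) + a*a*(t1*t2*t3)) = e*(e*k1-1) ->
  ~~ odd (e*a) -> gcdn (e*k1) (e*a %/ 2) <= 8 -> False.
Proof.
move=> /andP[e1 e16] k11 ak t11 t21 t31 Heq Hodd Hg.
have a2 : 2 <= a by lia.
have a0 : 0 < a by lia.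
have hb : a * (t1*t2*t3) <= 63.
  have h1 : 2 * (a * (a * (t1*t2*t3))) <= e*(e*k1-1) by rewrite -Heq; nia.
  have h2 : e*(e*k1-1) < 256 * k1.
    have : e*(e*k1-1) < e*(e*k1) by rewrite ltn_pmul2l //; lia.
    move=> /leq_trans; apply.
    rewrite mulnA; apply: leq_mul => //; exact: (leq_mul e16 e16).
  have h3 : 2 * (a * (a * (t1*t2*t3))) < 2 * (a * 64) by lia.
  rewrite !ltn_pmul2l // in h3; lia.
have := checkb_true.
rewrite /checkb => /allP /(_ e); rewrite mem_iota => /(_ ltac:(lia)).
move=> /allP /(_ a); rewrite mem_iota => /(_ ltac:(lia)).
move=> /allP /(_ k1); rewrite mem_iota => /(_ ltac:(rewrite add1n ltnS leq_divRL //; lia)).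
move=> /allP /(_ t1); rewrite mem_iota => /(_ ltac:(rewrite add1n ltnS leq_divRL; nia)).
move=> /allP /(_ t2); rewrite mem_iota => /(_ ltac:(rewrite add1n ltnS leq_divRL; nia)).
move=> /allP /(_ t3); rewrite mem_iota => /(_ ltac:(rewrite add1n ltnS leq_divRL; nia)).
by rewrite (badN_of e1 k11 Heq) Hodd Hg.
Qed.

Lemma mod1_split a c : 2 <= a -> 2 <= c -> c %% a = 1 -> exists2 t, 1 <= t & c = 1 + a * t.
Proof.
move=> a2 c2 hc; exists (c %/ a).
  rewrite lt0n; apply/negP => /eqP h0.
  by move: (divn_eq c a); rewrite h0 hc; lia.
by rewrite {1}(divn_eq c a) hc mulnC addnC.
Qed.

Lemma mod1_mul a x y : x %% a = 1 %% a -> (x * y) %% a = 1 %% a -> y %% a = 1 %% a.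
Proof. by move=> hx; rewrite -modnMml hx modnMml mul1n. Qed.

Lemma arith k r v cF m dH xF xH :
 2 < k -> k <= r -> gcdn k r <= 8 -> v = 1 + r*(k-1) ->
 (cF - 1) * k = 2 * xF * r -> (cF*m - 1) * k = 2 * xH * r ->
 v = cF * m * dH -> 2 <= cF -> 2 <= m -> 2 <= dH -> False.
Proof.
move=> k2 kr hg hv hF hH hvd cF2 m2 d2.
set e := gcdn k (2*r).
have e0 : 0 < e by rewrite gcdn_gt0; lia.
set k1 := k %/ e. set a := (2*r) %/ e.
have hk : k = k1 * e by rewrite divnK // dvdn_gcdl.
have hr : 2 * r = a * e by rewrite divnK // dvdn_gcdr.
have cop : coprime a k1.
  rewrite /coprime gcdnC; apply/eqP.
  have : gcdn k1 a * e = e by rewrite muln_gcdl -hk -hr.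
  by move/eqP; rewrite -{2}(mul1n e) eqn_pmul2r // => /eqP.
have k11 : 1 <= k1 by move: hk; case: (k1); lia.
have ak : 2 * k1 <= a.
  by rewrite -(leq_pmul2r e0) -mulnA -hk -hr; lia.
have a2 : 2 <= a by lia.
have e16 : e <= 16.
  have : e %| 2 * gcdn k r.
    by rewrite muln_gcdr dvdn_gcd dvdn_gcdr andbT dvdn_mull // dvdn_gcdl.
  move/dvdn_leq; rewrite muln_gt0 gcdn_gt0; lia.
have cmod : forall c x, 1 <= c -> (c - 1) * k = 2 * x * r -> c %% a = 1 %% a.
  move=> c x c1 hc.
  have : (c - 1) * k1 = x * a.
    apply/eqP; rewrite -(eqn_pmul2r e0) -mulnA -hk hc -mulnA; apply/eqP.
    by rewrite (mulnC x) -mulnA -hr mulnA mulnC.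
  move=> h; have : a %| c - 1.
    by rewrite -(Gauss_dvdl _ cop) h dvdn_mull.
  move/dvdnP => [q hq].
  by rewrite -(subnK c1) hq modnMDl.
have hcF := cmod cF xF ltac:(lia) hF.
have hcH := cmod (cF*m) xH ltac:(nia) hH.
have hm := mod1_mul hcF hcH.
have hvm : v %% a = 1 %% a.
  have h2 : 2 %| e * (k - 1).
    case/boolP: (odd k) => ok.
      by rewrite dvdn_mull // dvdn2 oddB ?ok //; lia.
    by rewrite dvdn_mulr // dvdn_gcd dvdn2 ok /= dvdn_mulr.
  move/dvdnP: h2 => [q hq].
  have : v = 1 + a * q.
    apply/eqP; rewrite -(eqn_pmul2l (isT : 0 < 2)) hv mulnDr mulnA hr.
    by rewrite -mulnA hq; apply/eqP; lia.
  by move=> ->; rewrite addnC mulnC modnMDl.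
have hd : dH %% a = 1 %% a by apply: (mod1_mul hcH); rewrite -hvd.
rewrite (modn_small (_ : 1 < a)) // in hcF hm hd.
have [t1 t11 et1] := mod1_split a2 cF2 hcF.
have [t2 t21 et2] := mod1_split a2 m2 hm.
have [t3 t31 et3] := mod1_split a2 d2 hd.
apply: (@check_false e a k1 t1 t2 t3) => //.
- by rewrite e16 andbT.
- have h1 : 2 * (v - 1) = a * (e * (e * k1 - 1)).
    by rewrite hv addKn mulnA hr -mulnA {1}hk (mulnC k1).
  have h2 : v - 1 = a * (t1+t2+t3 + a*(t1*t2+t1*t3+t2*t3) + a*a*(t1*t2*t3)).
    rewrite hvd et1 et2 et3.
    have -> : (1 + a * t1) * (1 + a * t2) * (1 + a * t3) = 1 + a * (t1+t2+t3 + a*(t1*t2+t1*t3+t2*t3) + a*a*(t1*t2*t3)) by ring.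
    by rewrite addKn.
  apply/eqP; rewrite -(eqn_pmul2l (ltnW a2)) -h1 h2; apply/eqP.
  by rewrite mulnCA.
- by rewrite mulnC -hr oddM.
- by rewrite [e*a]mulnC -hr mulKn // [e*k1]mulnC -hk.
Qed.

Lemma card_sum (V : finType) (C : {set V}) (p : pred V) :
  #|[set y in C | p y]| = \sum_(y in C) (p y : nat).
Proof.
rewrite -sum1_card (eq_bigl (fun y => (y \in C) && p y)); last by move=> y; rewrite inE.
by rewrite big_mkcondr /=; apply: eq_bigr => y _; case: (p y).
Qed.

Lemma dcount (T U : finType) (A : {set T}) (B : {set U}) (R : T -> U -> bool) :
  \sum_(x in A) #|[set y in B | R x y]| = \sum_(y in B) #|[set x in A | R x y]|.
Proof.
rewrite (eq_bigr _ (fun x _ => card_sum B (R x))) exchange_big.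
by apply: eq_bigr => y _; rewrite card_sum.
Qed.

Lemma sum_through (P : finType) (L : {set {set P}}) (y : P) (f : {set P} -> nat) :
  \sum_(l in L) (y \in l) * f l = \sum_(l in [set l in L | y \in l]) f l.
Proof.
rewrite [RHS]big_mkcond [LHS]big_mkcond; apply: eq_bigr => l _.
by rewrite inE; case: (l \in L); case: (y \in l) => //=; rewrite mul1n.
Qed.

Lemma pair_count (P : finType) (L : {set {set P}}) (Q : {set P * P}) :
  linear_space L -> (forall p, p \in Q -> p.1 != p.2) ->
  #|Q| = \sum_(l in L) #|[set p in Q | (p.1 \in l) && (p.2 \in l)]|.
Proof.
move=> [_ LS] HQ.
rewrite -(dcount Q L (fun p l => (p.1 \in l) && (p.2 \in l))) -sum1_card.
apply: eq_bigr => p pQ.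
have [l [[lL [h1 h2]] un]] := LS _ _ (HQ p pQ).
rewrite (_ : [set _ in L | _] = [set l]) ?cards1 //.
apply/setP => m; rewrite !inE; apply/andP/eqP => [[mL /andP[m1 m2]]|->].
  by apply/esym/un.
by rewrite lL h1 h2.
Qed.

Lemma card_pair (P : finType) (y : P) (A : {set P}) :
  #|[set p : P * P | (p.1 == y) && (p.2 \in A)]| = #|A|.
Proof.
rewrite -(card_imset A (fun a b (h : (y, a) = (y, b)) => congr1 snd h)).
apply: eq_card => -[a b]; rewrite inE /=.
apply/andP/imsetP => [[/eqP -> bA]|[z zA [-> ->]]]; last by rewrite eqxx.
by exists b.
Qed.

Lemma star (P : finType) (L : {set {set P}}) (y : P) (A : {set P}) :
  linear_space L -> y \notin A ->
  #|A| = \sum_(l in [set l in L | y \in l]) #|l :&: A|.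
Proof.
move=> LS yA.
rewrite -sum_through -(card_pair y) (pair_count LS); last first.
  by move=> p; rewrite inE => /andP[/eqP -> pA]; apply: contraNneq yA => ->.
apply: eq_bigr => l lL.
case yl: (y \in l); last first.
  rewrite mul0n; apply/eqP; rewrite cards_eq0; apply/eqP/setP => p.
  by rewrite !inE; apply/negP => /andP[/andP[/eqP -> _] /andP[]]; rewrite yl.
rewrite mul1n -(card_pair y); apply: eq_card => p; rewrite !inE.
by case: (p.1 =P y) => //= ->; rewrite yl /=; case: (p.2 \in A); case: (p.2 \in l).
Qed.

Lemma flags (P : finType) (L : {set {set P}}) (A : {set P}) :
  \sum_(x in A) #|[set l in L | x \in l]| = \sum_(l in L) #|l :&: A|.
Proof.
rewrite dcount; apply: eq_bigr => l _; apply: eq_card => x.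
by rewrite !inE andbC.
Qed.

Lemma point_line (P : finType) (L : {set {set P}}) k :
  linear_space L -> (forall l, l \in L -> #|l| = k) -> 2 < k -> k < #|P| ->
  exists l x, l \in L /\ x \notin l.
Proof.
move=> [_ LS] Lk k2 kP.
have : 1 < #|P| by lia.
move/card_gt1P => [x0 [y0 [_ _ xy]]].
have [l0 [[l0L _] _]] := LS _ _ xy.
exists l0.
have : [exists x, x \notin l0].
  apply: contraT; rewrite negb_exists => /forallP h.
  have : l0 = setT by apply/setP => z; rewrite inE; move: (h z); rewrite negbK.
  by move=> e; move: (Lk _ l0L); rewrite e cardsT; lia.
by move/existsP => [x xl]; exists x.
Qed.

Lemma r_ge_k (P : finType) (L : {set {set P}}) k r :
  linear_space L -> (forall l, l \in L -> #|l| = k) -> 2 < k -> k < #|P| ->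
  (forall x : P, #|[set l in L | x \in l]| = r) -> k <= r.
Proof.
move=> LSS Lk k2 kP Lr.
have [l [x [lL xl]]] := point_line LSS Lk k2 kP.
move: LSS => [_ LS].
pose f y := odflt set0 [pick m in L | (x \in m) && (y \in m)].
have hf : forall y, y \in l -> [/\ f y \in L, x \in f y & y \in f y].
  move=> y yl; rewrite /f; case: pickP => [m /andP[mL /andP[h1 h2]]|none] //=.
  have xy : x != y by apply: contraNneq xl => ->.
  have [m [[mL [h1 h2]] _]] := LS _ _ xy.
  by move: (none m); rewrite mL h1 h2.
rewrite -(Lk _ lL) -(Lr x) -(@card_in_imset _ _ f l).
  apply: subset_leq_card; apply/subsetP => _ /imsetP[y yl ->].
  by have [h1 h2 _] := hf y yl; rewrite inE h1 h2.
move=> y1 y2 y1l y2l e.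
apply/eqP; apply: contraT => ne.
have [m [_ un]] := LS _ _ ne.
have [h1 h2 h3] := hf y1 y1l; have [h1' h2' h3'] := hf y2 y2l.
have e1 := un l (conj lL (conj y1l y2l)).
have h4 : y2 \in f y1 by rewrite e.
have e2 := un (f y1) (conj h1 (conj h3 h4)).
by move: xl; rewrite -e1 e2 h2.
Qed.

Lemma transfer_pt (P : finType) (L : {set {set P}}) (G : {group {perm P}}) (S : {set P}) :
  line_transitive L G -> (forall (g : {perm P}) x, g \in G -> x \in S -> g x \in S) ->
  forall l1 l2, l1 \in L -> l2 \in L -> #|l1 :&: S| = #|l2 :&: S|.
Proof.
move=> LT HS.
suff le : forall l1 l2, l1 \in L -> l2 \in L -> #|l1 :&: S| <= #|l2 :&: S|.
  by move=> l1 l2 h1 h2; apply: anti_leq; rewrite !le.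
move=> l1 l2 h1 h2; have [g gG hg] := LT l1 l2 h1 h2.
rewrite -(card_imset (l1 :&: S) (@perm_inj _ g)).
apply: subset_leq_card; apply/subsetP => _ /imsetP[z /setIP[zl zS] ->].
by rewrite inE -hg imset_f //= HS.
Qed.

Definition onl (P : finType) (Q : {set P * P}) (l : {set P}) :=
  [set p in Q | (p.1 \in l) && (p.2 \in l)].

Lemma transfer_pair (P : finType) (L : {set {set P}}) (G : {group {perm P}}) (Q : {set P * P}) :
  line_transitive L G ->
  (forall (g : {perm P}) p, g \in G -> p \in Q -> (g p.1, g p.2) \in Q) ->
  forall l1 l2, l1 \in L -> l2 \in L -> #|onl Q l1| = #|onl Q l2|.
Proof.
move=> LT HS.
suff le : forall l1 l2, l1 \in L -> l2 \in L -> #|onl Q l1| <= #|onl Q l2|.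
  by move=> l1 l2 h1 h2; apply: anti_leq; rewrite !le.
move=> l1 l2 h1 h2; have [g gG hg] := LT l1 l2 h1 h2.
have inj : injective (fun p : P * P => (g p.1, g p.2)).
  move=> [a b] [c d] /= [e1 e2]; by rewrite (perm_inj e1) (perm_inj e2).
rewrite -(card_imset (onl Q l1) inj).
apply: subset_leq_card; apply/subsetP => p /imsetP[z]; rewrite inE => /andP[zQ /andP[z1 z2]] ->.
by rewrite inE HS //= -hg !imset_f.
Qed.

Lemma point_trans (P : finType) (L : {set {set P}}) k r (G : {group {perm P}}) :
  linear_space L -> (forall l, l \in L -> #|l| = k) -> 2 < k -> k < #|P| ->
  (forall x : P, #|[set l in L | x \in l]| = r) -> line_transitive L G ->
  #|P| = 1 + r * (k - 1) ->
  forall x y : P, exists2 g : {perm P}, g \in G & g x = y.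
Proof.
move=> LS Lk k2 kP Lr LT hv x y.
pose O := [set (g : {perm P}) x | g in G].
case yO: (y \in O).
  by move/imsetP: yO => [g gG ->]; exists g.
exfalso.
have kr := r_ge_k LS Lk k2 kP Lr.
have [l0 [_ [l0L _]]] := point_line LS Lk k2 kP.
have HO : forall (g : {perm P}) z, g \in G -> z \in O -> g z \in O.
  move=> g z gG /imsetP[h hG ->]; apply/imsetP; exists (h * g)%g; first by rewrite groupM.
  by rewrite permM.
set m := #|l0 :&: O|.
have hm : forall l, l \in L -> #|l :&: O| = m.
  by move=> l lL; apply: (transfer_pt LT HO).
have s1 : #|O| = r * m.
  rewrite (star LS (negbT yO)) (eq_bigr (fun _ => m)); last first.
    by move=> l; rewrite inE => /andP[lL _]; apply: hm.
  by rewrite sum_nat_const Lr mulnC.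
have s2 : #|O| * r = #|L| * m.
  rewrite -sum_nat_const (eq_bigr _ (fun z _ => esym (Lr z))) flags -sum_nat_const.
  by apply: eq_bigr => l lL; apply: hm.
have s3 : #|P| * r = #|L| * k.
  rewrite -cardsT -sum_nat_const (eq_bigr _ (fun z _ => esym (Lr z))) flags -sum_nat_const.
  by apply: eq_bigr => l lL; rewrite setIT; apply: Lk.
have xO : x \in O by apply/imsetP; exists 1%g; rewrite ?group1 ?perm1.
have m0 : 0 < m.
  rewrite lt0n; apply/negP => /eqP m0; move: s1; rewrite m0 muln0 => /eqP.
  by rewrite cards_eq0 => /eqP O0; move: xO; rewrite O0 inE.
have bL : #|L| = r * r.
  apply/eqP; rewrite -(eqn_pmul2r m0) -s2 s1; apply/eqP; ring.
move: s3; rewrite bL hv; nia.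
Qed.

Lemma count_v (P : finType) (L : {set {set P}}) k r :
  linear_space L -> (forall l, l \in L -> #|l| = k) -> 2 < k -> k < #|P| ->
  (forall x : P, #|[set l in L | x \in l]| = r) -> #|P| = 1 + r * (k - 1).
Proof.
move=> LS Lk k2 kP Lr.
have [l0 [x [l0L _]]] := point_line LS Lk k2 kP.
have := star LS (_ : x \notin [set~ x]); rewrite !inE eqxx => /(_ isT).
rewrite cardsC1 (eq_bigr (fun _ => k - 1)); last first.
  move=> l; rewrite inE => /andP[lL xl].
  by rewrite -setDE -(Lk _ lL) (cardsD1 x l) xl add1n subn1.
rewrite sum_nat_const Lr => h.
have : 0 < #|P| by lia.
lia.
Qed.

Lemma even_sym (T : finType) (S : {set T * T}) :
  (forall p, p \in S -> (p.2, p.1) \in S) -> (forall p, p \in S -> p.1 != p.2) ->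
  ~~ odd #|S|.
Proof.
move=> Hs Hi.
pose S1 := [set p in S | (nat_of_ord (enum_rank p.1) < nat_of_ord (enum_rank p.2))%N].
have inj : injective (fun p : T * T => (p.2, p.1)) by move=> [a b] [c d] /= [-> ->].
have e : (fun p : T * T => (p.2, p.1)) @: S1 = S :\: S1.
  apply/setP => -[a b]; rewrite [in RHS]inE.
  apply/imsetP/idP => [[q]|].
    rewrite inE => /andP[qS qlt] [-> ->]; rewrite inE /= Hs //= andbT.
    by apply/negP => h; move: (ltn_trans h qlt); rewrite ltnn.
  move=> /andP[pn pS]; exists (b, a) => //.
  rewrite inE /= pS /= -leqNgt in pn; rewrite inE /= (Hs _ pS) /= ltn_neqAle pn andbT.
  apply/negP => /eqP/val_inj/enum_rank_inj e.
  by move: (Hi _ pS); rewrite e eqxx.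
have sub : S1 \subset S by apply/subsetP => p; rewrite inE => /andP[].
have : #|S| = #|S1| + #|S1|.
  by rewrite -(cardsID S1 S) (setIidPr sub) -e card_imset.
move=> ->; by rewrite addnn odd_double.
Qed.

Lemma count_b (P : finType) (L : {set {set P}}) k r :
  (forall l, l \in L -> #|l| = k) ->
  (forall x : P, #|[set l in L | x \in l]| = r) -> #|P| * r = #|L| * k.
Proof.
move=> Lk Lr.
rewrite -cardsT -sum_nat_const (eq_bigr _ (fun z _ => esym (Lr z))) flags -sum_nat_const.
by apply: eq_bigr => l lL; rewrite setIT; apply: Lk.
Qed.

Definition innerQ (P : finType) (F : {set {set P}}) :=
  [set p : P * P | (p.1 != p.2) && (p.2 \in pblock F p.1)].

Lemma pblock_img (P : finType) (G : {group {perm P}}) (F : {set {set P}}) (g : {perm P}) x :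
  is_partition F -> G_invariant G F -> g \in G ->
  pblock F (g x) = (fun z => g z) @: pblock F x.
Proof.
move=> pF iF gG.
have cov : cover F = setT := cover_partition pF.
have bx : pblock F x \in F by apply: pblock_mem; rewrite cov inE.
apply: def_pblock (partition_trivIset pF) (iF _ _ gG bx) _.
by apply: imset_f; rewrite mem_pblock cov inE.
Qed.

Lemma class_uniform (P : finType) (G : {group {perm P}}) (F : {set {set P}}) :
  is_partition F -> G_invariant G F ->
  (forall x y : P, exists2 g : {perm P}, g \in G & g x = y) ->
  forall x0 B, B \in F -> #|B| = #|pblock F x0|.
Proof.
move=> pF iF tr x0 B BF.
have /set0Pn [y yB] := partition_neq0 pF BF.
have [g gG gx] := tr x0 y.
rewrite -(def_pblock (partition_trivIset pF) BF yB) -gx (pblock_img _ pF iF gG).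
by rewrite card_imset //; apply: perm_inj.
Qed.

Lemma innerQ_card (P : finType) (F : {set {set P}}) c :
  is_partition F -> (forall B, B \in F -> #|B| = c) -> #|innerQ F| = #|P| * (c - 1).
Proof.
move=> pF Fc.
have cov : cover F = setT := cover_partition pF.
have h1 : \sum_(p in innerQ F) #|[set x in [set: P] | p.1 == x]| = #|innerQ F|.
  rewrite -sum1_card; apply: eq_bigr => p _.
  rewrite (_ : [set _ in _ | _] = [set p.1]) ?cards1 //.
  by apply/setP => z; rewrite !inE eq_sym.
rewrite -h1 -dcount -cardsT -sum_nat_const; apply: eq_bigr => x _.
have bx : pblock F x \in F by apply: pblock_mem; rewrite cov inE.
rewrite -(Fc _ bx).
have -> : #|pblock F x| - 1 = #|pblock F x :\ x|.
  by rewrite (cardsD1 x (pblock F x)) mem_pblock cov inE add1n subn1.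
rewrite -(card_pair x); apply: eq_card => -[a b]; rewrite !inE /=.
case: (a =P x) => [->|]; last by rewrite andbF.
by rewrite andbT eq_sym.
Qed.

Lemma innerQ_inv (P : finType) (G : {group {perm P}}) (F : {set {set P}}) :
  is_partition F -> G_invariant G F ->
  forall (g : {perm P}) p, g \in G -> p \in innerQ F -> (g p.1, g p.2) \in innerQ F.
Proof.
move=> pF iF g [a b] gG; rewrite !inE /= => /andP[ab bB].
by rewrite (inj_eq perm_inj) ab (pblock_img _ pF iF gG) imset_f.
Qed.

Lemma innerQ_sym (P : finType) (F : {set {set P}}) :
  is_partition F -> forall p, p \in innerQ F -> (p.2, p.1) \in innerQ F.
Proof.
move=> pF [a b]; rewrite !inE /= => /andP[ab bB].
have cov : cover F = setT := cover_partition pF.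
have ba : pblock F a \in F by apply: pblock_mem; rewrite cov inE.
rewrite eq_sym ab (def_pblock (partition_trivIset pF) ba bB).
by rewrite mem_pblock cov inE.
Qed.

Lemma formula (P : finType) (L : {set {set P}}) k r (G : {group {perm P}}) (F : {set {set P}}) c :
  linear_space L -> (forall l, l \in L -> #|l| = k) -> 2 < k -> k < #|P| ->
  (forall x : P, #|[set l in L | x \in l]| = r) -> line_transitive L G ->
  is_partition F -> G_invariant G F -> (forall B, B \in F -> #|B| = c) ->
  exists x, (c - 1) * k = 2 * x * r.
Proof.
move=> LS Lk k2 kP Lr LT pF iF Fc.
have [l0 [_ [l0L _]]] := point_line LS Lk k2 kP.
set X := #|onl (innerQ F) l0|.
have hX : #|innerQ F| = #|L| * X.
  rewrite (pair_count LS); last by move=> [a b]; rewrite inE => /andP[].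
  rewrite -sum_nat_const; apply: eq_bigr => l lL.
  exact: (transfer_pair LT (innerQ_inv pF iF)).
have eX : ~~ odd X.
  apply: even_sym => -[a b]; rewrite inE /= => /andP[pQ /andP[h1 h2]].
    by rewrite inE /= h1 h2 andbT (innerQ_sym pF pQ).
  by move: pQ; rewrite inE => /andP[].
have h1 := innerQ_card pF Fc.
have h2 := count_b Lk Lr.
have P0 : 0 < #|P| by lia.
exists X./2.
have -> : 2 * X./2 = X by rewrite mul2n even_halfK.
apply/eqP; rewrite -(eqn_pmul2l P0); apply/eqP.
by rewrite mulnA -h1 hX -mulnA (mulnC X) mulnA -h2; ring.
Qed.

Lemma chain (P : finType) (L : {set {set P}}) (k r : nat)
  (G : {group {perm P}}) (F H : {set {set P}}) :
  linear_space L ->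
  (forall l, l \in L -> #|l| = k) ->
  2 < k -> k < #|P| ->
  (forall x : P, #|[set l in L | x \in l]| = r) ->
  line_transitive L G ->
  nontrivial_G_partition G F -> nontrivial_G_partition G H ->
  refines F H -> F != H ->
  gcdn k r <= 8 -> False.
Proof.
move=> LS Lk k2 kP Lr LT [[pF [F1 F2]] iF] [[pH [H1 H2]] iH] ref neq hg.
have hv := count_v LS Lk k2 kP Lr.
have tr := point_trans LS Lk k2 kP Lr LT hv.
have kr := r_ge_k LS Lk k2 kP Lr.
have [_ [x0 _]] := point_line LS Lk k2 kP.
have covF : cover F = setT := cover_partition pF.
have covH : cover H = setT := cover_partition pH.
set cF := #|pblock F x0|. set cH := #|pblock H x0|.
have FcF := class_uniform pF iF tr x0.
have HcH := class_uniform pH iH tr x0.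
have [xF hF] := formula LS Lk k2 kP Lr LT pF iF FcF.
have [xH hH] := formula LS Lk k2 kP Lr LT pH iH HcH.
have bF : pblock F x0 \in F by apply: pblock_mem; rewrite covF inE.
have B'H : pblock H x0 \in H by apply: pblock_mem; rewrite covH inE.
have cF2 : 2 <= cF by apply: F2.
have vH : #|P| = #|H| * cH by rewrite -cardsT (card_uniform_partition HcH pH).
have vF : #|P| = #|F| * cF by rewrite -cardsT (card_uniform_partition FcF pF).
set B' := pblock H x0.
set PB := [set B in F | B \subset B'].
have pPB : partition PB B'.
  apply/and3P; split.
  - apply/eqP/setP => y; apply/bigcupP/idP => [[B]|yB].
      by rewrite inE => /andP[_ /subsetP]; apply.
    have byF : pblock F y \in F by apply: pblock_mem; rewrite covF inE.
    have [B'' B''H sub] := ref _ byF.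
    have yy : y \in pblock F y by rewrite mem_pblock covF inE.
    have e1 := def_pblock (partition_trivIset pH) B''H (subsetP sub _ yy).
    have e2 := def_pblock (partition_trivIset pH) B'H yB.
    exists (pblock F y) => //; rewrite inE byF /=.
    by rewrite /B' -e2 e1.
  - apply: trivIsetS (partition_trivIset pF).
    by apply/subsetP => B; rewrite inE => /andP[].
  - by rewrite inE (partition0 pF).
have hcH : cH = #|PB| * cF.
  apply: (card_uniform_partition _ pPB) => B; rewrite inE => /andP[BF _]; exact: FcF.
have m2 : 2 <= #|PB|.
  have cH2 : 2 <= cH by apply: H2.
  case: (ltngtP #|PB| 1) => // [|m1]; first by move=> h; move: hcH; case: (#|PB|) h; lia.
  exfalso; move/negP: neq; apply; rewrite m1 mul1n in hcH.
  have FH : F \subset H.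
    apply/subsetP => B BF; have [B'' B''H sub] := ref _ BF.
    suff -> : B = B'' by [].
    apply/eqP; rewrite eqEcard sub /=; move: (FcF _ BF) (HcH _ B''H) hcH.
    rewrite /cF /cH => -> -> ->; exact: leqnn.
  rewrite eqEcard FH /=.
  have : #|F| * cF = #|H| * cF by rewrite -vF vH hcH.
  by move/eqP; rewrite eqn_pmul2r ?(ltn_trans _ cF2) // => /eqP ->.
apply: (@arith k r #|P| cF #|PB| #|H| xF xH) => //.
- by rewrite [cF * _]mulnC -hcH.
- by rewrite vH hcH; ring.
Qed.

Theorem theorem4p11 (P : finType) (L : {set {set P}}) (k r : nat)
  (G : {group {perm P}}) (C : {set {set P}}) :
  linear_space L ->
  (forall l, l \in L -> #|l| = k) ->
  2 < k -> k < #|P| ->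
  (forall x : P, #|[set l in L | x \in l]| = r) ->
  (forall g, g \in G -> is_aut L g) ->
  line_transitive L G ->
  nontrivial_G_partition G C ->
  gcdn k r <= 8 ->
  minimal_G_partition G C /\ maximal_G_partition G C.
Proof.
move=> LS Lk k2 kP Lr _ LT ntC hg; split.
  by move=> [D [ntD ref neq]]; apply: (chain LS Lk k2 kP Lr LT ntD ntC ref neq hg).
move=> [D [ntD ref neq]]; apply: (chain LS Lk k2 kP Lr LT ntC ntD ref _ hg).
by rewrite eq_sym.
Qed.
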